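(* Let $G$ be a Nash equilibrium graph and $H\subseteq G$ a non-trivial $2$-edge-connected component. Let $\pi=u_0-u_1-\dots-u_k$ be a $2$-path in $H$, oriented so that each $u_i$ with $0\le i<k$ has bought the link $(u_i,u_{i+1})$, and suppose $g(G)\ge 2k$. For $0\le i\le k-2$ let $\Delta C(u_i)$ be the change in the cost of $u_i$ caused by the $2$-swap on $u_{i+1}$ (i.e. $u_i$ replaces its link $(u_i,u_{i+1})$ by the link $(u_i,u_{i+2})$). Then $$\Delta C(u_i)=U_{i+1}-U_{i+2}-\dots-U_{k-1}-N_i,$$ where $N_i$ is the number of vertices $v\in V(G)\setminus\bar\pi$ with $x_1(v)+k-i\le x_2(v)+i$.
   Context: Sum network creation game: players $V=\{1,\dots,n\}$, parameter $\alpha>0$; a strategy of $u$ is $s_u\subseteq V\setminus\{u\}$; $G_s$ has an edge $uv$ whenever $v\in s_u$ or $u\in s_v$, and is regarded as a digraph with arc $(u,v)$ when $v\in s_u$; the cost of $u$ is $c_u(s)=\alpha|s_u|+\sum_{v\ne u}d_{G_s}(u,v)$. A Nash equilibrium graph is $G_s$ for a strategy vector $s$ from which no player can strictly lower his cost unilaterally. A $2$-edge-connected component $H$ is a maximal bridgeless subgraph; non-trivial means at least $3$ vertices. For $u\in V(H)$, $T(u)$ is the connected component containing $u$ of the subgraph of $G$ induced by $(V(G)\setminus V(H))\cup\{u\}$; the weight of $u_i$ is $U_i=|T(u_i)|$. A $2$-path in $H$ is a path $u_0-\dots-u_k$ in $H$ with $deg^-_H(u_i)=deg^+_H(u_i)=1$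 for all $0<i<k$ (in- and out-degrees counted among arcs to vertices of $H$). $g(G)$ is the girth of $G$ ($\infty$ for a tree). The interior of $\pi$ is $\bar\pi=\bigcup_{0<j<k}T(u_j)$, and for $v\in V(G)\setminus\bar\pi$, $x_1(v)$ and $x_2(v)$ are the distances in the graph $G$ with the vertices of $\bar\pi$ removed from $v$ to $u_k$ and to $u_0$ respectively. *)

(* Defs.v *)
From HB Require Import structures.
From mathcomp Require Import all_boot all_order all_algebra.
From mathcomp Require Import reals.
Set Implicit Arguments. Unset Strict Implicit. Unset Printing Implicit Defensive.
Import Order.TTheory GRing.Theory Num.Theory.
Local Open Scope ring_scope.

(* A strategy vector assigns to each player the set of vertices he buys.      *)
Definition strategy (T : finType) := {ffun T -> {set T}}.

Definition valid_strategy {T : finType} (s : strategy T) : Prop :=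
  forall u, u \notin s u.

Definition adj {T : finType} (s : strategy T) : rel T :=
  fun u v => (v \in s u) || (u \in s v).

Definition restrict {T : finType} (e : rel T) (S : {set T}) : rel T :=
  fun x y => [&& x \in S, y \in S & e x y].

Fixpoint ball {T : finType} (e : rel T) (S : {set T}) (u : T) (k : nat)
  : {set T} :=
  if k is k'.+1 then
    ball e S u k' :|: [set y in S | [exists x in ball e S u k', e x y]]
  else [set x in S | x == u].

(* Distance from u to v in the induced subgraph on S: the least k such that v
   is within k steps.  When v is unreachable this returns #|T| (only used
   where the relevant graph is connected). *)
Definition dist_in {T : finType} (e : rel T) (S : {set T}) (u v : T) : nat :=
  find (fun k => v \in ball e S u k) (iota 0 #|T|).

Definition dist {T : finType} (s : strategy T) (u v : T) : nat :=
  dist_in (adj s) setT u v.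

(* Cost of u: alpha |s_u| + sum_{v <> u} d(u,v); None encodes +infinity
   (when some vertex is unreachable from u). *)
Definition cost {T : finType} {R : realType} (alpha : R) (s : strategy T)
  (u : T) : option R :=
  if [forall v, connect (adj s) u v]
  then Some (alpha * (#|s u|)%:R + (\sum_(v | v != u) dist s u v)%:R)
  else None.

Definition lt_cost {R : realType} (a b : option R) : bool :=
  match a, b with
  | Some x, Some y => x < y
  | Some _, None => true
  | None, _ => false
  end.

Definition update {T : finType} (s : strategy T) (u : T) (t : {set T})
  : strategy T := [ffun w => if w == u then t else s w].

Definition is_NE {T : finType} {R : realType} (alpha : R) (s : strategy T)
  : Prop :=
  valid_strategy s /\
  forall (u : T) (t : {set T}), u \notin t ->
    ~~ lt_cost (cost alpha (update s u t) u) (cost alpha s u).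

(* 2-edge-connected components, as vertex sets of induced subgraphs
   (maximal bridgeless subgraphs are induced). *)
Definition connected_in {T : finType} (e : rel T) (S : {set T}) : Prop :=
  forall x y, x \in S -> y \in S -> connect (restrict e S) x y.

Definition remove_edge {T : finType} (e : rel T) (a b : T) : rel T :=
  fun x y => e x y && ~~ (((x == a) && (y == b)) || ((x == b) && (y == a))).

Definition bridgeless_in {T : finType} (e : rel T) (S : {set T}) : Prop :=
  connected_in e S /\
  forall a b, a \in S -> b \in S -> e a b ->
    connect (restrict (remove_edge e a b) S) a b.

Definition two_ec_component {T : finType} (e : rel T) (H : {set T}) : Prop :=
  bridgeless_in e H /\
  forall S : {set T}, H \subset S -> bridgeless_in e S -> S = H.

Definition Tset {T : finType} (e : rel T) (H : {set T}) (u : T) : {set T} :=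
  [set v | connect (restrict e ((~: H) :|: [set u])) u v].

Definition outdeg_in {T : finType} (s : strategy T) (H : {set T}) (u : T) :=
  #|[set v in H | v \in s u]|.
Definition indeg_in {T : finType} (s : strategy T) (H : {set T}) (u : T) :=
  #|[set v in H | u \in s v]|.

Definition two_path {T : finType} (s : strategy T) (H : {set T}) (k : nat)
  (u : nat -> T) : Prop :=
  [/\ forall i, (i <= k)%N -> u i \in H,
      forall i j, (i <= k)%N -> (j <= k)%N -> u i = u j -> i = j,
      forall i, (i < k)%N -> adj s (u i) (u i.+1)
    & forall i, (0 < i < k)%N ->
        indeg_in s H (u i) = 1%N /\ outdeg_in s H (u i) = 1%N].

(* g(G) >= m : every cycle of G has length >= m (vacuous for forests) *)
Definition girth_ge {T : finType} (e : rel T) (m : nat) : Prop :=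
  forall c : seq T, (3 <= size c)%N -> uniq c -> cycle e c -> (m <= size c)%N.

Definition pibar {T : finType} (s : strategy T) (H : {set T}) (k : nat)
  (u : nat -> T) : {set T} :=
  \bigcup_(j < k | (0 < j)%N) Tset (adj s) H (u j).

Definition x1 {T : finType} (s : strategy T) (H : {set T}) (k : nat)
  (u : nat -> T) (v : T) : nat :=
  dist_in (adj s) (~: pibar s H k u) v (u k).
Definition x2 {T : finType} (s : strategy T) (H : {set T}) (k : nat)
  (u : nat -> T) (v : T) : nat :=
  dist_in (adj s) (~: pibar s H k u) v (u 0%N).

Definition Nset {T : finType} (s : strategy T) (H : {set T}) (k : nat)
  (u : nat -> T) (i : nat) : nat :=
  #|[set v | (v \notin pibar s H k u) &&
             (x1 s H k u v + (k - i) <= x2 s H k u v + i)%N]|.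

Definition swap2 {T : finType} (s : strategy T) (u : nat -> T) (i : nat)
  : strategy T :=
  update s (u i) ((s (u i) :\ u i.+1) :|: [set u i.+2]).

(* Main.v *)
Require Import Defs.
From HB Require Import structures.
From mathcomp Require Import all_boot all_order all_algebra.
From mathcomp Require Import reals.
From mathcomp Require Import zify.
From mathcomp Require Import lra.
Set Implicit Arguments. Unset Strict Implicit. Unset Printing Implicit Defensive.
Import Order.TTheory GRing.Theory Num.Theory.

Section DistLib.
Local Open Scope nat_scope.
Variable T : finType.
Implicit Types (e : rel T) (S : {set T}).

Lemma ballS e S u n : ball e S u n.+1 =
  ball e S u n :|: [set y in S | [exists x in ball e S u n, e x y]].
Proof. by []. Qed.

Lemma ball_sub e S u n : ball e S u n \subset S.
Proof.
elim: n => [|n IH] /=.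
  by apply/subsetP => x; rewrite inE => /andP[].
rewrite subUset IH /=; apply/subsetP => x; rewrite inE => /andP[] //.
Qed.

Lemma ball_mono e S u m n : m <= n -> ball e S u m \subset ball e S u n.
Proof.
move=> /subnK <-; elim: (n - m) => [|d IH]; first by rewrite add0n.
by rewrite addSn ballS; apply: (subset_trans IH); apply: subsetUl.
Qed.

Lemma ball_step e S u n x y : x \in ball e S u n -> y \in S -> e x y ->
  y \in ball e S u n.+1.
Proof.
move=> hx hy exy; rewrite ballS inE; apply/orP; right.
by rewrite inE hy /=; apply/existsP; exists x; rewrite hx.
Qed.

Lemma ball0 e S u v : (v \in ball e S u 0) = (v \in S) && (v == u).
Proof. by rewrite /= inE. Qed.

Definition bp e S u v := fun n => v \in ball e S u n.

Lemma dist_le e S u v n : v \in ball e S u n -> dist_in e S u v <= n.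
Proof.
move=> hv; rewrite /dist_in.
case: (ltnP n #|T|) => hn; last first.
  by apply: leq_trans (find_size _ _) _; rewrite size_iota.
rewrite leqNgt; apply/negP => lt.
have := before_find 0 lt; rewrite nth_iota // add0n => /negP; apply.
by [].
Qed.

Lemma dist_has e S u v : has (fun n => v \in ball e S u n) (iota 0 #|T|) ->
  v \in ball e S u (dist_in e S u v) /\ dist_in e S u v < #|T|.
Proof.
move=> h; have hl := h; rewrite has_find size_iota in hl; split=> //.
by have := nth_find 0 h; rewrite nth_iota.
Qed.

Lemma dist_nohas e S u v : ~~ has (fun n => v \in ball e S u n) (iota 0 #|T|) ->
  dist_in e S u v = #|T|.
Proof. by move=> h; rewrite /dist_in (hasNfind h) size_iota. Qed.

Lemma dist_size e S u v : dist_in e S u v <= #|T|.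
Proof. by rewrite /dist_in; apply: leq_trans (find_size _ _) _; rewrite size_iota. Qed.

Lemma dist_lip e S u x y : x \in S -> y \in S -> e x y ->
  dist_in e S u y <= (dist_in e S u x).+1.
Proof.
move=> hx hy exy.
case: (boolP (has (fun n => x \in ball e S u n) (iota 0 #|T|))) => h.
  have [hb _] := dist_has h; apply: dist_le; exact: ball_step hb hy exy.
rewrite (dist_nohas h); apply: leq_trans (dist_size _ _ _ _) _; exact: leqnSn.
Qed.

Lemma dist_self e S u : u \in S -> dist_in e S u u = 0.
Proof. by move=> hu; apply/eqP; rewrite -leqn0; apply: dist_le; rewrite ball0 hu eqxx. Qed.

Lemma connect_has e S u v : u \in S -> connect (restrict e S) u v ->
  has (fun n => v \in ball e S u n) (iota 0 #|T|).
Proof.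
move=> hu /connectP[p pth ->].
case: (shortenP pth) => p' pth' uq _.
have hsz : size p' < #|T|.
  have := card_uniqP uq; move=> /= hc; rewrite -ltnS -hc.
  by rewrite ltnS max_card.
apply/hasP; exists (size p'); first by rewrite mem_iota.
elim/last_ind: p' pth' {uq hsz} => [|q y IH].
  by move=> _; rewrite /= inE hu eqxx.
rewrite rcons_path last_rcons size_rcons => /andP[pq /and3P[_ hy ey]].
exact: ball_step (IH pq) hy ey.
Qed.

Lemma dist_desc e S u v : has (fun n => v \in ball e S u n) (iota 0 #|T|) ->
  v != u -> exists w, [/\ w \in S, v \in S, e w v,
     has (fun n => w \in ball e S u n) (iota 0 #|T|) &
     (dist_in e S u w).+1 = dist_in e S u v].
Proof.
move=> h nvu; have [hb hlt] := dist_has h.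
move: hb hlt; case E: (dist_in e S u v) => [|d].
  by rewrite ball0 (negbTE nvu) andbF.
move=> hb hlt; move: hb; rewrite ballS inE => /orP[hb|].
  by have := dist_le hb; rewrite E ltnn.
rewrite inE => /andP[hv /existsP[w /andP[hw ew]]].
have wS : w \in S by apply: (subsetP (ball_sub e S u d)).
have hw' : has (fun n => w \in ball e S u n) (iota 0 #|T|).
  by apply/hasP; exists d => //; rewrite mem_iota /=; apply: ltnW.
exists w; split => //.
have l1 := dist_le hw.
have l2 := dist_lip u wS hv ew; rewrite E in l2.
by apply/eqP; rewrite eqSS eqn_leq l1.
Qed.

Lemma ball_prepend e S v x n : e v x -> v \in S -> x \in S ->
  ball e S x n \subset ball e S v n.+1.
Proof.
move=> evx hv hx; elim: n => [|n IH].
  apply/subsetP => y; rewrite ball0 => /andP[_ /eqP->].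
  by apply: ball_step evx => //; rewrite ball0 hv eqxx.
apply/subsetP => y; rewrite ballS inE => /orP[hy|].
  by apply: (subsetP (ball_mono _ _ _ (leqnSn _))); apply: (subsetP IH).
rewrite inE => /andP[hy /existsP[z /andP[hz ezy]]].
exact: ball_step (subsetP IH _ hz) hy ezy.
Qed.

Lemma ball_sym e S u v n : symmetric e ->
  v \in ball e S u n -> u \in ball e S v n.
Proof.
move=> sym; elim: n v => [|n IH] v.
  by rewrite !ball0 => /andP[hv /eqP<-]; rewrite hv eqxx.
rewrite ballS inE => /orP[hv|].
  by apply: (subsetP (ball_mono _ _ _ (leqnSn _))); apply: IH.
rewrite inE => /andP[hv /existsP[x /andP[hx exv]]].
have xS : x \in S by apply: (subsetP (ball_sub e S u n)).
by apply: (subsetP (ball_prepend n _ hv xS)); [rewrite sym | apply: IH].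
Qed.

Lemma dist_sym e S u v : symmetric e -> dist_in e S u v = dist_in e S v u.
Proof.
move=> sym; rewrite /dist_in; apply: eq_find => n.
by apply/idP/idP; apply: ball_sym.
Qed.

End DistLib.

Section Chain.
Local Open Scope nat_scope.
Variable T : finType.
Lemma dist_chain (e : rel T) (S : {set T}) u v : u \in S ->
  has (fun n => v \in ball e S u n) (iota 0 #|T|) ->
  exists p, [/\ path (restrict e S) u p, last u p = v, uniq (u :: p)
     & size p = dist_in e S u v].
Proof.
move=> uS.
have gen : forall d v, has (fun n => v \in ball e S u n) (iota 0 #|T|) ->
  dist_in e S u v = d ->
  exists p, [/\ path (restrict e S) u p, last u p = v, uniq (u :: p),
     size p = d & all (fun y => dist_in e S u y <= d) (u :: p)].
  elim=> [|d IH] w hw dw.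
    have [hb _] := dist_has hw; move: hb; rewrite dw ball0 => /andP[_ /eqP->].
    by exists [::]; rewrite /= dist_self.
  have nwu : w != u by apply/eqP => ewu; rewrite ewu dist_self in dw.
  have [x [xS wS exw hx dx]] := dist_desc hw nwu.
  have dx' : dist_in e S u x = d by move: dx; rewrite dw => -[].
  have [p [pp lp up sp ap]] := IH x hx dx'.
  exists (rcons p w); split.
  - by rewrite rcons_path pp lp /restrict xS wS exw.
  - by rewrite last_rcons.
  - rewrite -rcons_cons rcons_uniq up andbT; apply/negP => /(allP ap).
    by rewrite dw ltnn.
  - by rewrite size_rcons sp.
  - rewrite -rcons_cons all_rcons dw leqnn /=.
    by apply: sub_all ap => y /leqW.
move=> hv; have [p [a b c d _]] := gen _ v hv erefl; by exists p.
Qed.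
End Chain.


Section BFS.
Local Open Scope nat_scope.
Variable T : finType.
Variables (e : rel T) (s0 : T) (f : T -> nat).
Hypothesis f0 : f s0 = 0.
Hypothesis flip : forall x y, e x y -> f y <= (f x).+1.
Hypothesis fdesc : forall v, v != s0 -> exists w, e w v /\ (f w).+1 = f v.

Lemma bfs_ball n : ball e setT s0 n = [set v | f v <= n].
Proof.
elim: n => [|n IH]; apply/setP => v.
  rewrite ball0 !inE leqn0; apply/eqP/eqP => [->|fv] //.
  case: (eqVneq v s0) => // /fdesc[w [_ hw]]; by rewrite fv in hw.
rewrite ballS !inE IH inE; apply/orP/idP => [[h|/existsP[x]]|h].
- exact: leqW.
- by rewrite inE => /andP[hx /flip hy]; apply: leq_trans hy _.
- case: (leqP (f v) n) => hn; [by left|right].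
  have fv : f v = n.+1 by apply/eqP; rewrite eqn_leq h.
  have : v != s0 by apply/eqP => ev; rewrite ev f0 in fv.
  move=> /fdesc[w [ew hw]]; apply/existsP; exists w.
  by rewrite inE ew andbT -ltnS hw fv.
Qed.

Lemma bfs_bound v : f v < #|T|.
Proof.
have hex : forall n, n <= f v -> exists w, f w = n.
  have gen : forall m x, f x = m -> forall n, n <= m -> exists w, f w = n.
  elim=> [|m IH] x fx n hn.
    by exists x; rewrite fx; apply/eqP; rewrite eq_sym -leqn0.
  case: (leqP n m) => hnm; last first.
    by exists x; rewrite fx; apply/eqP; rewrite eqn_leq hn hnm.
  have : x != s0 by apply/eqP => ex; rewrite ex f0 in fx.
  move=> /fdesc[w [_ hw]]; apply: (IH w) => //; by move: hw; rewrite fx => -[].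
  by move=> n; apply: gen.
have sub : {subset iota 0 (f v).+1 <= map f (enum T)}.
  move=> n; rewrite mem_iota add0n => /andP[_ hn].
  have [w hw] := hex n hn; apply/mapP; exists w => //; by rewrite mem_enum.
have := uniq_leq_size (iota_uniq 0 (f v).+1) sub.
by rewrite size_iota size_map -cardE.
Qed.

Lemma bfs_dist v : dist_in e setT s0 v = f v.
Proof.
rewrite /dist_in; have hb := bfs_bound v.
rewrite (eq_find (a2 := fun n => f v <= n)); last by move=> n; rewrite bfs_ball inE.
rewrite -(subnKC (ltnW hb)) iotaD find_cat.
have -> : has (fun n => f v <= n) (iota 0 (f v)) = false.
  by apply/hasP => -[n]; rewrite mem_iota add0n => /andP[_ h1] h2; have := leq_ltn_trans h2 h1; rewrite ltnn.
rewrite size_iota add0n.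
have -> : (#|T| - f v) = (#|T| - f v).-1.+1 by rewrite prednK // subn_gt0.
by rewrite /= leqnn addn0.
Qed.

Lemma bfs_connect v : connect e s0 v.
Proof.
have gen : forall m x, f x = m -> connect e s0 x; last exact: (gen _ v erefl).
elim=> [|m IH] x fx.
  case: (eqVneq x s0) => [->|/fdesc[w [_ hw]]]; first exact: connect0.
  by rewrite fx in hw.
case: (eqVneq x s0) => [->|/fdesc[w [ew hw]]]; first exact: connect0.
apply: connect_trans (IH w _) (connect1 ew); by move: hw; rewrite fx => -[].
Qed.

End BFS.


Section PathHelp.
Local Open Scope nat_scope.
Variable T : finType.
Implicit Types (e : rel T) (S : {set T}).

Lemma path_restrict_all e S x q : path (restrict e S) x q -> all (mem S) q.
Proof.
elim: q x => [|y q IH] x //= /andP[/and3P[_ hy _] pq].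
by rewrite hy (IH _ pq).
Qed.

Lemma path_restrict_sub e S x q : path (restrict e S) x q -> path e x q.
Proof. by apply: sub_path => a b /and3P[]. Qed.

Lemma path_restrictI e S x q : path e x q -> x \in S -> all (mem S) q ->
  path (restrict e S) x q.
Proof.
elim: q x => [|y q IH] x //= /andP[exy pq] hx /andP[hy hq].
by rewrite /restrict hx hy exy (IH _ pq hy hq).
Qed.

Lemma path_rm e a b x q : path e x q -> a \notin x :: q ->
  path (remove_edge e a b) x q.
Proof.
elim: q x => [|y q IH] x //= /andP[exy pq].
rewrite !inE negb_or => /andP[nxa]; rewrite negb_or => /andP[nya hq].
rewrite IH ?andbT //; last by rewrite inE negb_or nya.
have h1 : (x == a) = false by rewrite eq_sym (negbTE nxa).
have h2 : (y == a) = false by rewrite eq_sym (negbTE nya).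
by rewrite /remove_edge exy h1 h2 andbF.
Qed.

Lemma restrict_sym e S : symmetric e -> symmetric (restrict e S).
Proof. by move=> sym x y; rewrite /restrict sym; case: (x \in S); case: (y \in S). Qed.

Lemma remove_sym e a b : symmetric e -> symmetric (remove_edge e a b).
Proof.
move=> sym x y; rewrite /remove_edge sym; congr (_ && _).
by case: (x == a); case: (x == b); case: (y == a); case: (y == b).
Qed.

Lemma connect_restrict_mem e S x y : connect (restrict e S) x y -> x = y \/ y \in S.
Proof.
move=> /connectP[p pth ->]; case: p pth => [|z p] pth; first by left.
right; have := path_restrict_all pth; move=> /allP; apply.
by have := mem_last z p.
Qed.

Lemma connect_restrict_mono e S1 S2 x y : S1 \subset S2 ->
  connect (restrict e S1) x y -> connect (restrict e S2) x y.
Proof.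
move=> sub; apply: connect_sub => a b /and3P[ha hb eab]; apply: connect1.
by rewrite /restrict (subsetP sub _ ha) (subsetP sub _ hb).
Qed.

Lemma connect_exit e x y (A : {set T}) : connect e x y -> x \in A -> y \notin A ->
  exists z w, [/\ connect (restrict e A) x z, z \in A, w \notin A & e z w].
Proof.
move=> /connectP[p pth ->]; elim: p x pth => [|z p IH] x /=.
  by move=> _ ->.
move=> /andP[exz pz] hx hl; case: (boolP (z \in A)) => hz.
  have [a [b [c1 ha hb eab]]] := IH z pz hz hl.
  exists a, b; split => //; apply: connect_trans c1.
  by apply: connect1; rewrite /restrict hx hz exz.
by exists x, z; split.
Qed.

End PathHelp.

Section PathHelp2.
Local Open Scope nat_scope.
Variable T : finType.
Lemma path_rm2 (e : rel T) a b x q : path e x q -> (a \notin x :: q) || (b \notin x :: q) ->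
  path (remove_edge e a b) x q.
Proof.
move=> pq /orP[ha|hb]; first exact: path_rm.
have := path_rm a pq hb; apply: sub_path => y z.
rewrite /remove_edge; case: (e y z) => //=.
by case: (y == a); case: (y == b); case: (z == a); case: (z == b).
Qed.
End PathHelp2.


Section Struct.
Local Open Scope nat_scope.
Variable T : finType.
Variables (s : strategy T) (H : {set T}) (k : nat) (u : nat -> T).
Hypothesis hval : valid_strategy s.
Hypothesis hH : two_ec_component (adj s) H.
Hypothesis hp : two_path s H k u.
Hypothesis hbuy : forall i, i < k -> u i.+1 \in s (u i).
Hypothesis hgirth : girth_ge (adj s) (2 * k).
Hypothesis hk : 2 <= k.
Hypothesis hconn : forall x y, connect (adj s) x y.

Local Notation E := (adj s).

Lemma Esym : symmetric E.
Proof. by move=> x y; rewrite /adj orbC. Qed.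

Lemma Eirr x : E x x = false.
Proof. by rewrite /adj orbb; apply/negbTE/hval. Qed.

Lemma uH j : j <= k -> u j \in H.
Proof. by case: hp => h _ _ _; apply: h. Qed.

Lemma uinj i j : i <= k -> j <= k -> u i = u j -> i = j.
Proof. by case: hp => _ h _ _; apply: h. Qed.

Lemma uE j : j < k -> E (u j) (u j.+1).
Proof. by move=> hj; rewrite /adj hbuy. Qed.

Lemma card1_eq (A : {set T}) x y : #|A| = 1 -> x \in A -> y \in A -> x = y.
Proof.
move=> /eqP/cards1P[z ->]; rewrite !inE => /eqP-> /eqP->; done.
Qed.

Lemma interior_nb j y : 0 < j < k -> y \in H -> E (u j) y ->
  y = u j.-1 \/ y = u j.+1.
Proof.
move=> hj yH; case: hp => _ _ _ /(_ j hj) [hin hout].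
move: hj => /andP[j0 jk].
rewrite /adj => /orP[hy|hy].
  right; apply: (card1_eq hout); rewrite inE ?hy ?yH //.
  by rewrite uH ?hbuy // ltnW.
left; apply: (card1_eq hin); rewrite inE ?hy ?yH //.
have jk' : j.-1 <= k by apply: leq_trans (leq_pred _) (ltnW jk).
have jk'' : j.-1 < k by apply: leq_ltn_trans (leq_pred _) jk.
by rewrite uH //=; have := hbuy jk''; rewrite prednK.
Qed.

Lemma not_back j : 0 < j < k -> u j.-1 \notin s (u j).
Proof.
move=> hj; apply/negP => hb.
have := interior_nb hj (y := u j.-1).
move: hj => /andP[j0 jk].
have jk' : j.-1 <= k by apply: leq_trans (leq_pred _) (ltnW jk).
case: hp => _ _ _ /(_ j); rewrite j0 jk => /(_ erefl) [_ hout].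
have := card1_eq hout (x := u j.-1) (y := u j.+1).
rewrite !inE hb hbuy // uH // uH //= => /(_ erefl erefl) /uinj.
move=> /(_ jk' jk) => h; move: j0 h; clear; case: j => //= j _ h; lia.
Qed.

Definition Tj j := Tset E H (u j).

Lemma Tj_self j : u j \in Tj j.
Proof. by rewrite inE connect0. Qed.

Lemma Tj_mem j v : v \in Tj j -> v = u j \/ v \notin H.
Proof.
rewrite inE => /connect_restrict_mem [->|]; first by left.
by rewrite !inE => /orP[|/eqP->]; [right|left].
Qed.

Lemma Tj_close j v w : v \in Tj j -> w \notin H -> E v w -> w \in Tj j.
Proof.
move=> hv hw evw; have hv' := hv; rewrite /Tj /Tset inE in hv' *.
rewrite inE; apply: (connect_trans hv'); apply: connect1.
rewrite /restrict !inE hw /= evw andbT.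
by case: (Tj_mem hv) => [->|->]; rewrite ?eqxx ?orbT.
Qed.


Lemma noM h1 h2 x : h1 \in H -> h2 \in H -> h1 != h2 -> x \notin H ->
  connect (restrict E (~: H :|: [set h1])) h1 x -> E x h2 -> False.
Proof.
move=> h1H h2H n12 xH /connectP[p0 pth0 lx] exh2.
rewrite lx in xH exh2; case: (shortenP pth0) xH exh2 => p pth up _ xH exh2.
clear p0 pth0 lx x.
have pE : path E h1 p := path_restrict_sub pth.
have pnH : forall y, y \in p -> y \notin H.
  move=> y hy; have := allP (path_restrict_all pth) y hy.
  rewrite !inE => /orP[//|/eqP eyh]; move: up; rewrite /= -eyh hy //.
set S := H :|: [set y | y \in p].
have HS : H \subset S by apply: subsetUl.
have pS : forall y, y \in p -> y \in S by move=> y hy; rewrite !inE hy orbT.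
have h1S : h1 \in S by rewrite inE h1H.
have lS : last h1 p \in S.
  have := mem_last h1 p; rewrite inE => /orP[/eqP->//|]; exact: pS.
have e1sym := restrict_sym S Esym.
have csym1 := sym_connect_sym e1sym.
have toh1 : forall y, y \in S -> connect (restrict E S) h1 y.
  move=> y; rewrite inE => /orP[yH|]; first by
    apply: (connect_restrict_mono HS); case: hH => [[hc _] _]; apply: hc.
  rewrite inE => hy; move: pth pE up pnH pS; case/splitPr: hy => p1 p2.
  move=> _ pE _ _ pS; apply/connectP; exists (rcons p1 y); last by rewrite last_rcons.
  apply: path_restrictI => //; last first.
    by apply/allP => z; rewrite mem_rcons => hz; apply: pS; rewrite mem_cat inE; move: hz; rewrite inE => /orP[->|->]; rewrite ?orbT.
  rewrite rcons_path; move: pE; rewrite cat_path => /andP[-> /=]; by case/andP.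
have bl : bridgeless_in E S.
  split.
    move=> a b aS bS; apply: connect_trans (toh1 _ bS).
    by rewrite csym1; apply: toh1.
  move=> a b aS bS eab.
  have nab : a != b by apply/eqP => eab'; rewrite eab' Eirr in eab.
  set e' := restrict (remove_edge E a b) S.
  case: (boolP ((a \in H) && (b \in H))) => [/andP[aH bH]|nabH].
    apply: (connect_restrict_mono HS); case: hH => [[_ hb] _]; exact: hb.
  have e'sym : symmetric e' by apply: restrict_sym; apply: remove_sym; apply: Esym.
  have cs' := sym_connect_sym e'sym.
  have Hp : forall y z, y \in H -> z \in H -> connect e' y z.
    move=> y z yH zH; case: hH => [[hc _] _]; have := hc y z yH zH.
    apply: connect_sub => y' z' /and3P[y'H z'H ey'z']; apply: connect1.
    rewrite /e' /restrict (subsetP HS _ y'H) (subsetP HS _ z'H) /remove_edge ey'z' /=.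
    apply/negP => /orP[]/andP[/eqP ea /eqP eb]; move: nabH; rewrite -ea -eb ?y'H ?z'H //.
  have reach : forall w, w \in p -> (w == a) || (w == b) ->
      exists2 h, h \in H & connect e' w h.
    move=> w hw wab; move: pth pE up pnH pS lS exh2 xH.
    case/splitPr: hw => p1 p2 _ pE up pnH pS lS exh2 xH.
    have wH : w \notin H by apply: pnH; rewrite mem_cat inE eqxx orbT.
    have memS : forall y, y \in h1 :: p1 ++ w :: p2 -> y \in S.
      by move=> y; rewrite inE => /orP[/eqP->//|]; apply: pS.
    move: pE; rewrite cat_path => /andP[pE1 /= /andP[elw pE2]].
    have lx : last h1 (p1 ++ w :: p2) = last w p2 by rewrite last_cat.
    rewrite lx in exh2.
    move: up; rewrite -cat_cons cat_uniq => /and3P[up1 hdisj up2].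
    have wnp1 : w \notin h1 :: p1.
      by apply/negP => hw1; move: hdisj => /hasP; apply; exists w; rewrite ?inE ?eqxx.
    have wnp2 : w \notin p2 by move: up2 => /= /andP[].
    set l := last h1 p1.
    have lin : l \in h1 :: p1 by apply: mem_last.
    have lS1 : l \in S by move: lin; rewrite inE => /orP[/eqP->//|h]; apply: pS; rewrite mem_cat h.
    have wS : w \in S by apply: pS; rewrite mem_cat inE eqxx orbT.
    have lw : l != w by apply/eqP => elw'; move: wnp1; rewrite -elw' lin.
    case: (boolP ((l == a) || (l == b))) => lab; last first.
      exists h1 => //; rewrite cs'; apply/connectP; exists (rcons p1 w); last by rewrite last_rcons.
      rewrite rcons_path; apply/andP; split.
        apply: path_restrictI => //; first by apply: path_rm2 => //; move: wab => /orP[]/eqP<-; rewrite wnp1 ?orbT.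
        by apply/allP => z hz; apply: memS; rewrite inE mem_cat hz orbT.
      rewrite /e' /restrict lS1 wS /=.
      rewrite /remove_edge elw /=; move: lab; rewrite negb_or => /andP[/negbTE-> /negbTE->] //.
    exists h2 => //.
    case Eq: (rcons p2 h2) => [|f0 r]; first by move: (f_equal size Eq); rewrite size_rcons.
    have pf : path E w (f0 :: r) by rewrite -Eq rcons_path pE2 exh2.
    have f0in : f0 \in rcons p2 h2 by rewrite Eq inE eqxx.
    have fS : forall y, y \in f0 :: r -> y \in S.
      move=> y; rewrite -Eq mem_rcons inE => /orP[/eqP->|hy]; first by rewrite inE h2H.
      by apply: pS; rewrite mem_cat inE hy !orbT.
    have wnf : w \notin f0 :: r.
      rewrite -Eq mem_rcons inE negb_or (negbTE wnp2) andbT; apply/eqP => ewh; move: wH; by rewrite ewh h2H.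
    have f0ab : ~~ ((f0 == a) || (f0 == b)).
      apply/negP => fab.
      have fw : f0 != w by apply/eqP => efw; move: wnf; rewrite -efw inE eqxx.
      have lf : l = f0.
        move/eqP: lw => lw'; move/eqP: fw => fw'.
        by case/orP: wab => /eqP ew; case/orP: lab => /eqP el; case/orP: fab => /eqP ef; congruence.
      move: f0in; rewrite mem_rcons inE => /orP[/eqP ef|hf].
        move: lin; rewrite lf ef inE => /orP[/eqP e21|h2p1]; first by move: n12; rewrite e21 eqxx.
        by move: (pnH h2); rewrite mem_cat h2p1 h2H => /(_ erefl).
      move: hdisj => /hasP; apply; exists f0; first by rewrite inE hf orbT.
      by rewrite -lf.
    apply/connectP; exists (f0 :: r); last by rewrite -Eq last_rcons.
    move: pf => /= /andP[ewf pr]; apply/andP; split.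
      rewrite /e' /restrict wS (fS f0) ?inE ?eqxx //=.
      rewrite /remove_edge ewf /=; move: f0ab; rewrite negb_or => /andP[/negbTE-> /negbTE->].
      by rewrite !andbF.
    apply: path_restrictI => //; first by apply: path_rm2 => //; move: wab wnf => /orP[]/eqP<- ->; rewrite ?orbT.
      by apply: fS; rewrite inE eqxx.
    by apply/allP => z hz; apply: fS; rewrite inE hz orbT.
  have endH : forall y, y \in S -> (y == a) || (y == b) -> exists2 h, h \in H & connect e' y h.
    move=> y; rewrite inE => /orP[yH _|]; first by exists y => //; exact: connect0.
    by rewrite inE; apply: reach.
  have aa : (a == a) || (a == b) by rewrite eqxx.
  have [ha haH ca] := endH a aS aa.
  have bb : (b == a) || (b == b) by rewrite eqxx orbT.
  have [hb hbH cb] := endH b bS bb.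
  apply: connect_trans ca _; apply: connect_trans (Hp _ _ haH hbH) _.
  by rewrite cs'.
have := hH.2 S HS bl => eSH.
move: lS xH; rewrite eSH => ->.
done.
Qed.


Lemma A_edge j x y : 0 < j < k -> x \in Tj j -> y \notin Tj j -> E x y ->
  x = u j /\ (y = u j.-1 \/ y = u j.+1).
Proof.
move=> hj hx hy exy.
have yH : y \in H.
  apply/negPn/negP => yH; move: hy; by rewrite (Tj_close hx yH exy).
have jk : j <= k by move: hj => /andP[_ /ltnW].
case: (Tj_mem hx) => [xe|xH].
  by split => //; apply: interior_nb => //; rewrite -xe.
exfalso; apply: (noM (h1 := u j) (h2 := y) (x := x)) => //.
- exact: uH.
- by apply/eqP => ey; move: hy; rewrite -ey Tj_self.
- by move: hx; rewrite /Tj /Tset inE.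
Qed.

Lemma Tj_disj j l v : 0 < j < k -> 0 < l < k -> v \in Tj j -> v \in Tj l -> j = l.
Proof.
move=> hj hl hvj hvl; apply/eqP/negPn/negP => njl.
have jk : j <= k by move: hj => /andP[_ /ltnW].
have lk : l <= k by move: hl => /andP[_ /ltnW].
have ul : u l \notin Tj j.
  apply/negP => /Tj_mem [e|]; last by rewrite uH.
  by move: njl; rewrite (uinj lk jk e) eqxx.
have csym := sym_connect_sym (restrict_sym (~: H :|: [set u l]) Esym).
have c : connect (restrict E (~: H :|: [set u l])) v (u l).
  by rewrite csym; move: hvl; rewrite /Tj /Tset inE.
have [z [w [_ hz hw /and3P[zS _ ezw]]]] := connect_exit c hvj ul.
have [ez _] := A_edge hj hz hw ezw.
move: zS; rewrite ez !inE uH //= => /eqP e.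
by move: njl; rewrite (uinj jk lk e) eqxx.
Qed.

Definition P := pibar s H k u.

Lemma inP v : reflect (exists j, 0 < j < k /\ v \in Tj j) (v \in P).
Proof.
apply: (iffP bigcupP) => [[j j0 hv]|[j [hj hv]]].
  by exists j; rewrite j0 ltn_ord.
by move: hj => /andP[j0 jk]; exists (Ordinal jk).
Qed.

Lemma uP j : 0 < j < k -> u j \in P.
Proof. by move=> hj; apply/inP; exists j; rewrite Tj_self. Qed.

Lemma end_notP j : j <= k -> (j == 0) || (j == k) -> u j \notin P.
Proof.
move=> jk hj0; apply/negP => /inP[l [hl hv]].
have lk : l <= k by move: hl => /andP[_ /ltnW].
case: (Tj_mem hv) => [e|]; last by rewrite uH.
move: (uinj jk lk e) hl hj0 => ->; clear; lia.
Qed.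

Lemma u0P : u 0 \notin P. Proof. by apply: end_notP. Qed.
Lemma ukP : u k \notin P. Proof. by apply: end_notP; rewrite ?eqxx ?orbT. Qed.

Lemma exitP x y : x \notin P -> y \in P -> E x y ->
  (x = u 0 /\ y = u 1) \/ (x = u k /\ y = u k.-1).
Proof.
move=> xP /inP[j [hj hy]] exy.
have hx : x \notin Tj j by apply/negP => hx; move: xP; rewrite (introT (inP x)) //; exists j.
have eyx : E y x by rewrite Esym.
have [ey ex] := A_edge hj hy hx eyx.
move: hj => /andP[j0 jk].
case: ex => ex.
  case: (ltnP 1 j) => j1.
    have : u j.-1 \in P by apply: uP; apply/andP; split; [lia|apply: leq_ltn_trans (leq_pred _) jk].
    by rewrite -ex (negbTE xP).
  have ej : j = 1 by lia.
  by left; rewrite ex ey ej.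
case: (ltnP j.+1 k) => j1.
  have : u j.+1 \in P by apply: uP; apply/andP; split.
  by rewrite -ex (negbTE xP).
have ej : j = k.-1 by lia.
right; rewrite ex ey ej prednK //; lia.
Qed.

Definition Q := ~: P.

Lemma Q_conn0 : connect (restrict E Q) (u 0) (u k).
Proof.
have k0 : 0 < k by lia.
have h := hH.1.2 (u 0) (u 1) (uH (leq0n _)) (uH k0) (uE k0).
have u0Q : u 0 \in Q by rewrite inE u0P.
have u1Q : u 1 \notin Q by rewrite inE negbK uP //; lia.
have [z [w [cz zQ wQ /and3P[zH wH ezw]]]] := connect_exit h u0Q u1Q.
have zk : z = u k.
  move: ezw; rewrite /remove_edge => /andP[ezw nrm].
  move: zQ wQ; rewrite !inE negbK => zP wP.
  case: (exitP zP wP ezw) => [[ez ew]|[ez _]] //.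
  by move: nrm; rewrite ez ew !eqxx.
rewrite -zk; move: cz; apply: connect_sub => a b /and3P[aQ bQ /and3P[_ _ /andP[eab _]]].
by apply: connect1; rewrite /restrict aQ bQ eab.
Qed.


Lemma Q_conn v : v \in Q -> connect (restrict E Q) (u 0) v.
Proof.
move=> vQ.
have csym := sym_connect_sym (restrict_sym Q Esym).
have u1Q : u 1 \notin Q by rewrite inE negbK uP //; lia.
have [z [w [cz zQ wQ ezw]]] := connect_exit (hconn v (u 1)) vQ u1Q.
move: (zQ) (wQ); rewrite !inE negbK => zP wP.
have cz' : connect (restrict E Q) v z.
  by move: cz; apply: connect_sub => a b hab; apply: connect1.
rewrite csym; case: (exitP zP wP ezw) => [[ez _]|[ez _]]; first by rewrite -ez.
by apply: connect_trans cz' _; rewrite ez csym Q_conn0.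
Qed.

Lemma path_iota m n : m + n <= k ->
  path E (u m) (map u (iota m.+1 n)) /\ last (u m) (map u (iota m.+1 n)) = u (m + n).
Proof.
elim: n m => [|n IH] m hmn; first by rewrite addn0.
have h1 : m.+1 + n <= k by rewrite addSn -addnS.
have [p1 l1] := IH m.+1 h1.
split; first by rewrite /= p1 uE // ; lia.
by rewrite /= l1 addnS.
Qed.

Lemma girth_k : k <= dist_in E Q (u k) (u 0).
Proof.
have ukQ : u k \in Q by rewrite inE ukP.
have csym := sym_connect_sym (restrict_sym Q Esym).
have c : connect (restrict E Q) (u k) (u 0) by rewrite csym Q_conn0.
have [q [pq lq uq sq]] := dist_chain ukQ (connect_has ukQ c).
rewrite -sq.
have qQ := path_restrict_all pq.
case ek : k hk => [|k'] // hk'.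
have [pi li] : path E (u 1) (map u (iota 2 k')) /\ last (u 1) (map u (iota 2 k')) = u (1 + k').
  by apply: path_iota; rewrite ek add1n.
rewrite add1n -ek in li.
set c0 := u 1 :: (map u (iota 2 k') ++ q).
have cyc : cycle E c0.
  rewrite /c0 /= rcons_cat cat_path pi li rcons_path lq.
  have e01 : E (u 0) (u 1) by apply: uE; rewrite ek.
  rewrite e01 andbT /=.
  exact: path_restrict_sub pq.
have qne : q != [::].
  apply/eqP => q0; move: lq; rewrite q0 /= => /uinj; move=> /(_ (leqnn _) (leq0n _)).
  by rewrite ek.
have unq : uniq c0.
  rewrite /c0 -[u 1 :: _]cat_cons -[u 1 :: map u _]/(map u (iota 1 k'.+1)) cat_uniq.
  rewrite (map_inj_in_uniq (s := iota 1 k'.+1)) ?iota_uniq /=; last first.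
    move=> a b ha hb; apply: uinj; move: ha hb; rewrite -[1 :: iota 2 k']/(iota 1 k'.+1) !mem_iota ek; lia.
  move: uq => /= /andP[ukq ->]; rewrite andbT.
  apply/hasP => -[y yq hy].
  have yQ := allP qQ y yq.
  have [t ht ey] : exists2 t, 1 <= t <= k & y = u t.
    move: hy; rewrite inE => /orP[/eqP->|/mapP[t]]; first by exists 1 => //; rewrite ek.
    rewrite mem_iota => ht ->; exists t => //; move: ht; rewrite ek; lia.
  case: (ltnP t k) => tk.
    have tP : u t \in P by apply: uP; apply/andP; split; lia.
    by move: yQ; rewrite ey /= /Q inE tP.
  have etk : t = k by lia.
  by move: ukq; rewrite -etk -ey yq.
have sz : size c0 = k + size q by rewrite /c0 /= size_cat size_map size_iota ek.
have s3 : 3 <= size c0.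
  by rewrite sz; case: (q) qne => // y q' _ /=; lia.
have := hgirth s3 unq cyc; rewrite sz; lia.
Qed.


Variable i : nat.
Hypothesis hi : i.+2 <= k.

Local Notation s' := (swap2 s u i).
Local Notation E' := (adj s').

Lemma ui_ne1 : u i != u i.+1.
Proof. by apply/eqP => /uinj; move=> /(_ _ _); lia. Qed.
Lemma ui_ne2 : u i != u i.+2.
Proof. by apply/eqP => /uinj; move=> /(_ _ _); lia. Qed.
Lemma ui_ne12 : u i.+1 != u i.+2.
Proof. by apply/eqP => /uinj; move=> /(_ _ _); lia. Qed.

Lemma no_tri : u i.+2 \notin s (u i).
Proof.
apply/negP => h.
have c3 : cycle E [:: u i; u i.+1; u i.+2].
  rewrite /= uE ?uE //; last by lia.
  by rewrite /adj h orbT.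
have un : uniq [:: u i; u i.+1; u i.+2].
  by rewrite /= !inE negb_or ui_ne1 ui_ne2 ui_ne12.
have := hgirth (isT : 3 <= size [:: u i; u i.+1; u i.+2]) un c3; rewrite /=; lia.
Qed.

Lemma back_i : u i \notin s (u i.+1).
Proof. by have := not_back (j := i.+1); apply; lia. Qed.

Definition pnew x y := ((x == u i) && (y == u i.+2)) || ((x == u i.+2) && (y == u i)).
Definition pold x y := ((x == u i) && (y == u i.+1)) || ((x == u i.+1) && (y == u i)).

Lemma E'_eq x y : E' x y = if pnew x y then true else if pold x y then false else E x y.
Proof.
have n1 := ui_ne1; have n2 := ui_ne2; have n12 := ui_ne12.
have nt := no_tri; have bi := back_i.
rewrite /adj /swap2 /update /pnew /pold !ffunE.
case: (eqVneq x (u i)) => [->|xi]; case: (eqVneq y (u i)) => [->|yi] /=.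
- rewrite !inE (negbTE n1) (negbTE n2) (negbTE (hval (u i))) /=; by rewrite ?andbF.
- rewrite !inE; case: (eqVneq y (u i.+2)) => [->|y2] /=; first by rewrite !orbT.
  rewrite ?andbF ?orbF /=.
  by case: (eqVneq y (u i.+1)) => [->|y1] /=; rewrite ?(negbTE bi) ?andbF.
- rewrite !inE; case: (eqVneq x (u i.+2)) => [->|x2] /=; first by rewrite !orbT.
  rewrite ?andbF ?orbF /=.
  by case: (eqVneq x (u i.+1)) => [->|x1] /=; rewrite ?(negbTE bi) ?andbF ?orbF.
- by rewrite !andbF.
Qed.


Definition J v := find (fun j => (0 < j) && (v \in Tj j)) (iota 0 k).

Lemma J_in v j : 0 < j < k -> v \in Tj j -> J v = j.
Proof.
move=> hj hv.
have hle : J v <= j.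
  rewrite leqNgt; apply/negP => lt; have := before_find 0 lt.
  rewrite nth_iota ?add0n; last by lia.
  by move: hj => /andP[-> _]; rewrite hv.
have hlt : J v < k by lia.
have hh : has (fun j => (0 < j) && (v \in Tj j)) (iota 0 k).
  by rewrite has_find size_iota.
have := nth_find 0 hh; rewrite nth_iota // add0n => /andP[j0 hv'].
by apply: Tj_disj hv' hv => //; rewrite j0.
Qed.

Lemma inP2 v : v \in P -> 0 < J v < k /\ v \in Tj (J v).
Proof. by move=> /inP[j [hj hv]]; rewrite (J_in hj hv). Qed.

Definition Sj j := ~: H :|: [set u j].
Definition rho j v := dist_in E (Sj j) (u j) v.
Definition aa v := dist_in E Q (u 0) v.
Definition bb v := dist_in E Q (u k) v.
Definition absd a b := (a - b) + (b - a).
Definition g j := if j <= i then i - j else if j == i.+1 then 2 else j - i - 1.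

Definition f v := if v \in P then absd i (J v) + rho (J v) v
  else minn (i + aa v) (k - i + bb v).
Definition f' v := if v \in P then g (J v) + rho (J v) v
  else minn (i + aa v) (k - i - 1 + bb v).

Lemma Tj_Sj j v : v \in Tj j -> v \in Sj j.
Proof. by case/Tj_mem => [->|h]; rewrite !inE ?eqxx ?orbT ?h. Qed.

Lemma rho_self j : rho j (u j) = 0.
Proof. by apply: dist_self; rewrite !inE eqxx orbT. Qed.

Lemma rho_lip j x y : x \in Tj j -> y \in Tj j -> E x y -> rho j y <= (rho j x).+1.
Proof. by move=> hx hy; apply: dist_lip; apply: Tj_Sj. Qed.

Lemma rho_desc j v : v \in Tj j -> v != u j ->
  exists w, [/\ E w v, w \in Tj j & (rho j w).+1 = rho j v].
Proof.
move=> hv nv.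
have ujS : u j \in Sj j by rewrite !inE eqxx orbT.
have hc : connect (restrict E (Sj j)) (u j) v by move: hv; rewrite /Tj /Tset inE.
have hh := connect_has ujS hc.
have [w [wS _ ewv _ dw]] := dist_desc hh nv.
exists w; split => //.
rewrite /Sj !inE in wS; case/orP: wS => [wH|/eqP ->]; last exact: Tj_self.
have := Tj_close hv wH; apply; by rewrite Esym.
Qed.

Lemma fP j v : 0 < j < k -> v \in Tj j -> f v = absd i j + rho j v.
Proof.
move=> hj hv; have vP : v \in P by apply/inP; exists j.
by rewrite /f vP (J_in hj hv).
Qed.

Lemma f'P j v : 0 < j < k -> v \in Tj j -> f' v = g j + rho j v.
Proof.
move=> hj hv; have vP : v \in P by apply/inP; exists j.
by rewrite /f' vP (J_in hj hv).
Qed.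

Lemma u0Q : u 0 \in Q. Proof. by rewrite inE u0P. Qed.
Lemma ukQ : u k \in Q. Proof. by rewrite inE ukP. Qed.

Lemma aa0 : aa (u 0) = 0. Proof. exact: dist_self u0Q. Qed.
Lemma bbk : bb (u k) = 0. Proof. exact: dist_self ukQ. Qed.
Lemma bb0 : k <= bb (u 0). Proof. exact: girth_k. Qed.
Lemma aak : k <= aa (u k). Proof. by rewrite /aa dist_sym ?girth_k //; apply: Esym. Qed.

Lemma f_u0 : f (u 0) = i.
Proof. by rewrite /f (negbTE u0P) aa0 addn0; have := bb0; move=> h; apply/minn_idPl; lia. Qed.
Lemma f_uk : f (u k) = k - i.
Proof. by rewrite /f (negbTE ukP) bbk addn0; have := aak; move=> h; apply/minn_idPr; lia. Qed.
Lemma f'_u0 : f' (u 0) = i.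
Proof. by rewrite /f' (negbTE u0P) aa0 addn0; have := bb0; move=> h; apply/minn_idPl; lia. Qed.
Lemma f'_uk : f' (u k) = k - i - 1.
Proof. by rewrite /f' (negbTE ukP) bbk addn0; have := aak; move=> h; apply/minn_idPr; lia. Qed.

Lemma f_uj j : 0 < j < k -> f (u j) = absd i j.
Proof. by move=> hj; rewrite (fP hj (Tj_self j)) rho_self addn0. Qed.
Lemma f'_uj j : 0 < j < k -> f' (u j) = g j.
Proof. by move=> hj; rewrite (f'P hj (Tj_self j)) rho_self addn0. Qed.

Lemma aa_has v : v \in Q -> has (fun n => v \in ball E Q (u 0) n) (iota 0 #|T|).
Proof. by move=> vQ; apply: connect_has u0Q (Q_conn vQ). Qed.
Lemma bb_has v : v \in Q -> has (fun n => v \in ball E Q (u k) n) (iota 0 #|T|).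
Proof.
move=> vQ; apply: connect_has ukQ _.
have csym := sym_connect_sym (restrict_sym Q Esym).
by apply: connect_trans (Q_conn vQ); rewrite csym Q_conn0.
Qed.

Lemma aa_lip x y : x \in Q -> y \in Q -> E x y -> aa y <= (aa x).+1.
Proof. exact: dist_lip. Qed.
Lemma bb_lip x y : x \in Q -> y \in Q -> E x y -> bb y <= (bb x).+1.
Proof. exact: dist_lip. Qed.

Lemma aa_desc v : v \in Q -> v != u 0 -> exists w, [/\ E w v, w \in Q & (aa w).+1 = aa v].
Proof. by move=> vQ nv; have [w [wQ _ ewv _ d]] := dist_desc (aa_has vQ) nv; exists w. Qed.
Lemma bb_desc v : v \in Q -> v != u k -> exists w, [/\ E w v, w \in Q & (bb w).+1 = bb v].
Proof. by move=> vQ nv; have [w [wQ _ ewv _ d]] := dist_desc (bb_has vQ) nv; exists w. Qed.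


Lemma uP_int j : j <= k -> u j \in P -> 0 < j < k.
Proof.
move=> jk hP; case: j jk hP => [|j] jk hP; first by rewrite (negbTE u0P) in hP.
case: (ltnP j.+1 k) => // hjk; have ejk : j.+1 = k by lia.
by rewrite ejk (negbTE ukP) in hP.
Qed.

Lemma k1_int : 0 < 1 < k. Proof. by apply/andP; split; lia. Qed.
Lemma km1_int : 0 < k.-1 < k. Proof. by apply/andP; split; lia. Qed.

Lemma edge_cases x y : E x y ->
  [\/ (exists j, [/\ 0 < j < k, x \in Tj j & y \in Tj j]),
      (exists j l, [/\ 0 < j < k, 0 < l < k, x = u j, y = u l & (l = j.-1 \/ l = j.+1)]),
      ((x = u 0 /\ y = u 1) \/ (x = u 1 /\ y = u 0)) |
      ((x = u k /\ y = u k.-1) \/ (x = u k.-1 /\ y = u k)) \/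
      (x \notin P /\ y \notin P)].
Proof.
move=> exy.
case: (boolP (x \in P)) => xP; case: (boolP (y \in P)) => yP.
- have [hjx hx] := inP2 xP; have [hjy hy] := inP2 yP.
  case: (eqVneq (J x) (J y)) => ejj.
    by apply: Or41; exists (J x); rewrite ejj; split => //; rewrite -ejj.
  have ynx : y \notin Tj (J x).
    by apply/negP => h; move: ejj; rewrite (J_in hjx h) eqxx.
  have [ex ey] := A_edge hjx hx ynx exy.
  apply: Or42; exists (J x).
  case: ey => ey.
    exists (J x).-1; split => //; [|by left].
    by apply: uP_int; [lia| rewrite -ey].
  exists (J x).+1; split => //; [|by right].
  by apply: uP_int; [lia| rewrite -ey].
- have eyx : E y x by rewrite Esym.
  case: (exitP yP xP eyx) => [[ey ex]|[ey ex]]; first by apply: Or43; right.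
  by apply: Or44; left; right.
- case: (exitP xP yP exy) => [[ey ex]|[ey ex]]; first by apply: Or43; left.
  by apply: Or44; left; left.
- by apply: Or44; right.
Qed.

Lemma f_lip x y : E x y -> f y <= (f x).+1.
Proof.
move=> exy; case: (edge_cases exy).
- move=> [j [hj hx hy]]; rewrite (fP hj hx) (fP hj hy).
  by have := rho_lip hx hy exy; lia.
- move=> [j [l [hj hl -> -> hjl]]]; rewrite f_uj // f_uj //; rewrite /absd; lia.
- by case=> -[-> ->]; rewrite f_u0 f_uj ?k1_int //; rewrite /absd; lia.
- case; first by case=> -[-> ->]; rewrite f_uk f_uj ?km1_int //; rewrite /absd; lia.
  move=> [xP yP]; rewrite /f (negbTE xP) (negbTE yP).
  have xQ : x \in Q by rewrite inE xP.
  have yQ : y \in Q by rewrite inE yP.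
  have := aa_lip xQ yQ exy; have := bb_lip xQ yQ exy; lia.
Qed.

Lemma f_ui : f (u i) = 0.
Proof.
case: (posnP i) => [e0|ip]; first by rewrite e0 f_u0.
by rewrite f_uj /absd ?subnn //; apply/andP; split; lia.
Qed.

Lemma f_desc v : v != u i -> exists w, E w v /\ (f w).+1 = f v.
Proof.
move=> nvi.
case: (boolP (v \in P)) => vP.
  have [hj hv] := inP2 vP; set j := J v in hj hv.
  case: (eqVneq v (u j)) => [evj|nvj].
    have nji : j != i by apply/eqP => eji; move: nvi; rewrite evj eji eqxx.
    case: (ltnP i j) => hij.
      exists (u j.-1); split.
        by rewrite evj; have := uE (j := j.-1); rewrite prednK; [apply; lia|lia].
      rewrite evj (f_uj hj).
      case: (posnP j.-1) => hj1.
        by rewrite hj1 f_u0 /absd; lia.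
      by rewrite f_uj /absd; [lia|apply/andP; split; lia].
    exists (u j.+1); split.
      by rewrite evj Esym; apply: uE; lia.
    by rewrite evj (f_uj hj) f_uj /absd; [lia|apply/andP; split; lia].
  have [w [ewv hw dw]] := rho_desc hv nvj.
  by exists w; split => //; rewrite (fP hj hv) (fP hj hw) -dw addnS.
have vQ : v \in Q by rewrite inE vP.
case: (leqP (i + aa v) (k - i + bb v)) => hm.
  case: (eqVneq v (u 0)) => [ev0|nv0].
    have i0 : i != 0 by apply/eqP => e0; move: nvi; rewrite ev0 e0 eqxx.
    exists (u 1); split; first by rewrite ev0 Esym; apply: uE; lia.
    by rewrite ev0 f_u0 f_uj ?k1_int // /absd; lia.
  have [w [ewv wQ dw]] := aa_desc vQ nv0.
  exists w; split => //.
  have fv : f v = i + aa v by rewrite /f (negbTE vP); apply/minn_idPl.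
  have wP : (w \in P) = false by apply/negbTE; rewrite inE in wQ.
  have fw : f w <= i + aa w by rewrite /f wP geq_minl.
  have := f_lip ewv; lia.
case: (eqVneq v (u k)) => [evk|nvk].
  exists (u k.-1); split; first by rewrite evk; have := uE (j := k.-1); rewrite prednK; [apply; lia|lia].
  by rewrite evk f_uk f_uj ?km1_int // /absd; lia.
have [w [ewv wQ dw]] := bb_desc vQ nvk.
exists w; split => //.
have hm' : k - i + bb v <= i + aa v by lia.
have fv : f v = k - i + bb v by rewrite /f (negbTE vP); apply/minn_idPr.
have wP : (w \in P) = false by apply/negbTE; rewrite inE in wQ.
have fw : f w <= k - i + bb w by rewrite /f wP geq_minr.
have := f_lip ewv; lia.
Qed.


Lemma u_eq a b : a <= k -> b <= k -> (u a == u b) = (a == b).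
Proof. by move=> ha hb; apply/eqP/eqP => [/uinj|->] //; apply. Qed.

Lemma pold_u a b : a <= k -> b <= k ->
  pold (u a) (u b) = ((a == i) && (b == i.+1)) || ((a == i.+1) && (b == i)).
Proof. by move=> ha hb; rewrite /pold !u_eq //; lia. Qed.

Lemma ui1P : u i.+1 \in P. Proof. by apply: uP; apply/andP; split; lia. Qed.


Lemma pold_Q x y : x \in Q -> y \in Q -> ~~ pold x y.
Proof.
rewrite !inE => xP yP; rewrite /pold.
apply/negP => /orP[]/andP[/eqP ex /eqP ey].
  by move: yP; rewrite ey ui1P.
by move: xP; rewrite ex ui1P.
Qed.

Lemma pold_T j x y : x \in Tj j -> y \in Tj j -> ~~ pold x y.
Proof.
move=> hx hy; rewrite /pold; apply/negP => /orP[]/andP[/eqP ex /eqP ey].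
  case: (Tj_mem hx) => [ex'|]; last by rewrite ex uH //; lia.
  case: (Tj_mem hy) => [ey'|]; last by rewrite ey uH //; lia.
  by move: ui_ne1; rewrite -ex -ey ex' ey' eqxx.
case: (Tj_mem hx) => [ex'|]; last by rewrite ex uH //; lia.
case: (Tj_mem hy) => [ey'|]; last by rewrite ey uH //; lia.
by move: ui_ne1; rewrite -ex -ey ex' ey' eqxx.
Qed.

Lemma E'_of x y : E x y -> ~~ pold x y -> E' x y.
Proof. by move=> exy np; rewrite E'_eq (negbTE np) exy; case: (pnew x y). Qed.

Lemma E'_new : E' (u i.+2) (u i).
Proof. by rewrite E'_eq /pnew !eqxx orbT. Qed.

Lemma E'_new2 : E' (u i) (u i.+2).
Proof. by rewrite E'_eq /pnew !eqxx. Qed.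

Lemma f'_ui : f' (u i) = 0.
Proof.
case: (posnP i) => [e0|ip]; first by rewrite e0 f'_u0.
by rewrite f'_uj /g ?leqnn ?subnn //; apply/andP; split; lia.
Qed.

Lemma f'_ui2 : f' (u i.+2) = 1.
Proof.
case: (ltnP i.+2 k) => h.
  rewrite f'_uj /g; last by apply/andP; split; lia.
  have -> : (i.+2 <= i) = false by lia.
  have -> : (i.+2 == i.+1) = false by lia.
  lia.
have ek : i.+2 = k by lia.
by rewrite ek f'_uk; lia.
Qed.

Lemma g_lip j l : (l = j.-1 \/ l = j.+1) -> ~~ ((j == i) && (l == i.+1)) ->
  ~~ ((j == i.+1) && (l == i)) -> 0 < j -> g l <= (g j).+1.
Proof.
move=> hl h1 h2 j0.
have h1' : ~ (j = i /\ l = i.+1) by move=> [e1 e2]; move: h1; rewrite e1 e2 !eqxx.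
have h2' : ~ (j = i.+1 /\ l = i) by move=> [e1 e2]; move: h2; rewrite e1 e2 !eqxx.
rewrite /g; case: (leqP l i) => ?; case: (leqP j i) => ?; try case: eqP => ?; try case: eqP => ?; lia.
Qed.

Lemma g1 : 0 < i -> g 1 = i - 1.
Proof. by move=> ip; rewrite /g ip. Qed.

Lemma gk1 : g k.-1 = if k.-1 == i.+1 then 2 else k - i - 2.
Proof. rewrite /g; have -> : (k.-1 <= i) = false by lia. case: eqP => //; lia. Qed.

Lemma f'_lip x y : E' x y -> f' y <= (f' x).+1.
Proof.
rewrite E'_eq; case pn: (pnew x y).
  move: pn; rewrite /pnew => /orP[]/andP[/eqP-> /eqP->] _.
    by rewrite f'_ui f'_ui2.
  by rewrite f'_ui f'_ui2.
case po: (pold x y) => // exy.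
case: (edge_cases exy).
- move=> [j [hj hx hy]]; rewrite (f'P hj hx) (f'P hj hy).
  by have := rho_lip hx hy exy; lia.
- move=> [j [l [hj hl ex ey hjl]]]; rewrite ex ey !f'_uj //.
  have ja : j <= k by lia.
  have la : l <= k by lia.
  move: po; rewrite ex ey (pold_u ja la) => /negbT; rewrite negb_or => /andP[n1 n2].
  apply: g_lip => //; lia.
- have p01 : pold (u 0) (u 1) = (i == 0) by rewrite pold_u; lia.
  have p10 : pold (u 1) (u 0) = (i == 0) by rewrite pold_u; lia.
  case=> -[ex ey]; move: po; rewrite ex ey ?p01 ?p10 => /negbT hi0;
    (have ip : 0 < i by lia); rewrite f'_u0 (f'_uj k1_int) (g1 ip); lia.
- case.
    by case=> -[ex ey]; rewrite ex ey f'_uk (f'_uj km1_int) gk1; case: eqP; lia.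
  move=> [xP yP]; rewrite /f' (negbTE xP) (negbTE yP).
  have xQ : x \in Q by rewrite inE xP.
  have yQ : y \in Q by rewrite inE yP.
  have := aa_lip xQ yQ exy; have := bb_lip xQ yQ exy; lia.
Qed.


Lemma E'_uu a b : a <= k -> b <= k -> E (u a) (u b) ->
  ~~ (((a == i) && (b == i.+1)) || ((a == i.+1) && (b == i))) -> E' (u a) (u b).
Proof. by move=> ha hb eab h; apply: E'_of => //; rewrite pold_u. Qed.

Lemma f'_desc v : v != u i -> exists w, E' w v /\ (f' w).+1 = f' v.
Proof.
move=> nvi.
case: (boolP (v \in P)) => vP.
  have [hj hv] := inP2 vP; set j := J v in hj hv.
  case: (eqVneq v (u j)) => [evj|nvj].
    have nji : j != i by apply/eqP => eji; move: nvi; rewrite evj eji eqxx.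
    rewrite evj (f'_uj hj).
    case: (ltnP j i) => hij.
      exists (u j.+1); split.
        apply: E'_uu; [lia|lia| |lia]; by rewrite Esym; apply: uE; lia.
      rewrite f'_uj /g; last by apply/andP; split; lia.
      have -> : j.+1 <= i by lia.
      have -> : j <= i by lia.
      lia.
    case: (eqVneq j i.+1) => [ej|nj1].
      exists (u i.+2); split.
        rewrite ej; apply: E'_uu; [lia|lia| |lia]; by rewrite Esym; apply: uE; lia.
      rewrite f'_ui2 ej /g; have -> : (i.+1 <= i) = false by lia.
      by rewrite eqxx.
    case: (eqVneq j i.+2) => [ej|nj2].
      exists (u i); split; first by rewrite ej; apply: E'_new2.
      rewrite f'_ui ej /g; have -> : (i.+2 <= i) = false by lia.
      have -> : (i.+2 == i.+1) = false by lia.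
      lia.
    exists (u j.-1); split.
      have hj1 := uE (j := j.-1); rewrite prednK in hj1; last by lia.
      apply: E'_uu; [lia|lia|apply: hj1; lia|lia].
    rewrite f'_uj /g; last by apply/andP; split; lia.
    have -> : (j.-1 <= i) = false by lia.
    have -> : (j <= i) = false by lia.
    have -> : (j.-1 == i.+1) = false by lia.
    have -> : (j == i.+1) = false by lia.
    lia.
  have [w [ewv hw dw]] := rho_desc hv nvj.
  exists w; split; first by apply: E'_of => //; apply: pold_T hw hv.
  by rewrite (f'P hj hv) (f'P hj hw) -dw addnS.
have vQ : v \in Q by rewrite inE vP.
case: (leqP (i + aa v) (k - i - 1 + bb v)) => hm.
  case: (eqVneq v (u 0)) => [ev0|nv0].
    have i0 : 0 < i by case: (posnP i) => // e0; move: nvi; rewrite ev0 e0 eqxx.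
    exists (u 1); split.
      rewrite ev0; apply: E'_uu; [lia|lia| |lia]; by rewrite Esym; apply: uE; lia.
    by rewrite ev0 f'_u0 (f'_uj k1_int) (g1 i0); lia.
  have [w [ewv wQ dw]] := aa_desc vQ nv0.
  exists w; split; first by apply: E'_of => //; apply: pold_Q.
  have fv : f' v = i + aa v by rewrite /f' (negbTE vP); apply/minn_idPl.
  have wP : (w \in P) = false by apply/negbTE; rewrite inE in wQ.
  have fw : f' w <= i + aa w by rewrite /f' wP geq_minl.
  have := f'_lip (E'_of ewv (pold_Q wQ vQ)); lia.
case: (eqVneq v (u k)) => [evk|nvk].
  rewrite evk f'_uk.
  case: (eqVneq k i.+2) => [ek|nk].
    exists (u i); split; first by rewrite ek; apply: E'_new2.
    rewrite f'_ui; lia.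
  exists (u k.-1); split.
    have hj1 := uE (j := k.-1); rewrite prednK in hj1; last by lia.
    apply: E'_uu; [lia|lia|apply: hj1; lia|lia].
  rewrite (f'_uj km1_int) gk1; case: eqP; lia.
have [w [ewv wQ dw]] := bb_desc vQ nvk.
exists w; split; first by apply: E'_of => //; apply: pold_Q.
have hm' : k - i - 1 + bb v <= i + aa v by lia.
have fv : f' v = k - i - 1 + bb v by rewrite /f' (negbTE vP); apply/minn_idPr.
have wP : (w \in P) = false by apply/negbTE; rewrite inE in wQ.
have fw : f' w <= k - i - 1 + bb w by rewrite /f' wP geq_minr.
have := f'_lip (E'_of ewv (pold_Q wQ vQ)); lia.
Qed.


Lemma dist_f v : dist s (u i) v = f v.
Proof. exact: (bfs_dist f_ui f_lip f_desc v). Qed.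

Lemma dist_f' v : dist s' (u i) v = f' v.
Proof. exact: (bfs_dist f'_ui f'_lip f'_desc v). Qed.

Lemma conn' v : connect E' (u i) v.
Proof. exact: (bfs_connect f'_desc v). Qed.

Lemma card_s' : #|s' (u i)| = #|s (u i)|.
Proof.
rewrite /swap2 /update ffunE eqxx setUC cardsU1 (cardsD1 (u i.+1) (s (u i))).
rewrite hbuy; last by lia.
rewrite !inE (negbTE no_tri) andbF.
by [].
Qed.

Definition Nset_set := [set v | (v \notin pibar s H k u) &&
             (x1 s H k u v + (k - i) <= x2 s H k u v + i)].
Definition cnt v := \sum_(i.+2 <= j < k) ((v \in Tj j) : nat).

Lemma sum_ind a b j : \sum_(a <= j' < b) ((j' == j) : nat) = ((a <= j) && (j < b)).
Proof.
elim: b => [|b IH]; first by rewrite big_geq //; case: (a <= j).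
case: (leqP a b) => hab.
  rewrite big_nat_recr //= IH; case: (ltngtP j b) => hjb.
  - by rewrite andbT addn0 ltnS (ltnW hjb) andbT.
  - have -> : (j < b.+1) = false by lia.
    by rewrite !andbF.
  - by rewrite andbF -hjb ltnSn andbT hjb hab.
rewrite big_geq //; lia.
Qed.

Lemma pointwise v : f' v + cnt v + (v \in Nset_set) = f v + (v \in Tj i.+1).
Proof.
case: (boolP (v \in P)) => vP.
  have [hj hv] := inP2 vP; set j := J v in hj hv.
  have hcnt : cnt v = ((i.+2 <= j) && (j < k)).
    rewrite /cnt -(sum_ind i.+2 k j); apply: eq_big_nat => j' hj'.
    case: (eqVneq j' j) => [->|nj]; first by rewrite hv.
    case: (boolP (v \in Tj j')) => // hv'.
    by move: nj; rewrite (Tj_disj _ hj hv' hv) ?eqxx //; apply/andP; split; lia.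
  have hN : (v \in Nset_set) = false by rewrite inE vP.
  have ht : (v \in Tj i.+1) = (j == i.+1).
    case: (eqVneq j i.+1) => [<-|nj] //; apply/negP => hv'.
    by move: nj; rewrite (Tj_disj _ hj hv' hv) ?eqxx //; apply/andP; split; lia.
  rewrite hcnt hN ht (f'P hj hv) (fP hj hv) /g /absd.
  case: (leqP j i) => ?; case: eqP => ?; lia.
have hcnt : cnt v = 0.
  rewrite /cnt big1_seq // => j' /andP[_]; rewrite mem_index_iota => hj'.
  case: (boolP (v \in Tj j')) => // hv'; move: vP; rewrite (introT (inP v)) //.
  by exists j'; split => //; apply/andP; split; lia.
have ht : (v \in Tj i.+1) = false.
  apply/negP => hv'; move: vP; rewrite (introT (inP v)) //.
  by exists i.+1; split => //; apply/andP; split; lia.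
have vQ : v \in Q by rewrite inE vP.
have hN : (v \in Nset_set) = (bb v + (k - i) <= aa v + i).
  rewrite inE -/P vP /= /x1 /x2 -/P -/Q.
  by rewrite /aa /bb (dist_sym Q v (u k) Esym) (dist_sym Q v (u 0) Esym).
rewrite hcnt ht hN /f /f' (negbTE vP).
case: leqP => ? /=; lia.
Qed.


Lemma sum_ind_card (A : {set T}) : \sum_v ((v \in A) : nat) = #|A|.
Proof. rewrite -sum1_card [RHS]big_mkcond /=. by apply: eq_big => // v _; case: (v \in A). Qed.

Lemma drop_ui (F : T -> nat) : F (u i) = 0 -> \sum_(v | v != u i) F v = \sum_v F v.
Proof. by move=> h; rewrite [RHS](bigD1 (u i)) //= h add0n. Qed.

Lemma sum_main : \sum_(v | v != u i) f' v + \sum_(i.+2 <= j < k) #|Tj j| + #|Nset_set| =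
  \sum_(v | v != u i) f v + #|Tj i.+1|.
Proof.
have t0 : (u i \in Tj i.+1) = false.
  apply/negP => /Tj_mem [e|]; first by move: ui_ne1; rewrite e eqxx.
  by rewrite uH //; lia.
have p0 := pointwise (u i); rewrite f'_ui f_ui t0 /= in p0.
have c0 : cnt (u i) = 0 by lia.
have n0 : ((u i \in Nset_set) : nat) = 0 by lia.
have E1 : \sum_(v | v != u i) (f' v + cnt v + ((v \in Nset_set) : nat)) =
    \sum_(v | v != u i) (f v + ((v \in Tj i.+1) : nat)).
  by apply: eq_bigr => v _; apply: pointwise.
rewrite !big_split /= in E1.
rewrite (drop_ui (F := fun v => ((v \in Tj i.+1) : nat))) ?t0 // sum_ind_card in E1.
rewrite (drop_ui (F := cnt)) // (drop_ui (F := fun v => ((v \in Nset_set) : nat))) // in E1.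
rewrite sum_ind_card in E1; rewrite -E1; congr (_ + _ + _).
rewrite /cnt exchange_big /=; apply: eq_bigr => j _; by rewrite sum_ind_card.
Qed.


Lemma final_eq : [/\ forall v, connect E' (u i) v, #|s' (u i)| = #|s (u i)| &
  \sum_(v | v != u i) dist s' (u i) v + \sum_(i.+2 <= j < k) #|Tset E H (u j)|
    + #|Nset_set| = \sum_(v | v != u i) dist s (u i) v + #|Tset E H (u i.+1)|].
Proof.
split; [exact: conn'|exact: card_s'|].
rewrite (eq_bigr _ (fun v _ => dist_f' v)) (eq_bigr _ (fun v _ => dist_f v)).
exact: sum_main.
Qed.

End Struct.


Lemma NE_conn (R : realType) (alpha : R) (T : finType) (s : strategy T) u0 :
  is_NE alpha s -> forall v, connect (adj s) u0 v.
Proof.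
move=> [hv hne] v.
case: (boolP [forall v, connect (adj s) u0 v]) => [/forallP h|hn]; first exact: h.
exfalso.
have hu : u0 \notin [set: T] :\ u0 by rewrite !inE eqxx.
have := hne u0 _ hu; rewrite /lt_cost /cost (negbTE hn).
have -> : [forall v, connect (adj (update s u0 ([set: T] :\ u0))) u0 v].
  apply/forallP => w; case: (eqVneq w u0) => [->|nw]; first exact: connect0.
  by apply: connect1; rewrite /adj /update ffunE eqxx !inE nw.
by [].
Qed.

Local Open Scope ring_scope.

Theorem lemma1 (T : finType) (R : realType) (alpha : R) (s : strategy T)
  (H : {set T}) (k : nat) (u : nat -> T) :
  0 < alpha ->
  is_NE alpha s ->
  two_ec_component (adj s) H -> (3 <= #|H|)%N ->
  two_path s H k u ->
  (forall i, (i < k)%N -> u i.+1 \in s (u i)) ->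
  girth_ge (adj s) (2 * k) ->
  forall i, (i.+2 <= k)%N ->
  exists c : R,
    cost alpha s (u i) = Some c /\
    cost alpha (swap2 s u i) (u i) =
      Some (c + ((#|Tset (adj s) H (u i.+1)|)%:R
                 - \sum_(i.+2 <= j < k) (#|Tset (adj s) H (u j)|)%:R
                 - (Nset s H k u i)%:R)).
Proof.
move=> apos hNE hH hH3 hp hbuy hgirth i hi.
have hk : (2 <= k)%N by apply: leq_trans hi; rewrite ltnS.
have hval : valid_strategy s by case: hNE.
have hc0 := @NE_conn _ _ _ _ (u i) hNE.
have hconn : forall x y, connect (adj s) x y.
  move=> x y; apply: connect_trans (hc0 y).
  by rewrite (sym_connect_sym (@Esym _ s)) hc0.
have [hc' hcard hsum] := final_eq hval hH hp hbuy hgirth hk hconn hi.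
exists (alpha * (#|s (u i)|)%:R + (\sum_(v | v != u i) dist s (u i) v)%:R).
split.
  rewrite /cost; have -> : [forall v, connect (adj s) (u i) v] by apply/forallP.
  by [].
rewrite /cost; have -> : [forall v, connect (adj (swap2 s u i)) (u i) v] by apply/forallP.
congr Some; rewrite hcard.
have hR := congr1 (fun n : nat => (n%:R : R)) hsum; rewrite /= !natrD in hR.
rewrite -natr_sum /Nset.
set A' := ((\sum_(v | v != u i) dist (swap2 s u i) (u i) v)%:R : R) in hR *.
set A := ((\sum_(v | v != u i) dist s (u i) v)%:R : R) in hR *.
set C := ((\sum_(i.+2 <= j < k) #|Tset (adj s) H (u j)|)%:R : R) in hR *.
set N := ((#|Nset_set s H k u i|)%:R : R) in hR.
set N' := ((#|_|)%:R : R) in hR *.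
lra.
Qed.
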